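(* Let $\Gamma$ be a typing environment, $e$ an application term, $B$ a base type and $b$ a ground base type. If $\Gamma\vdash e \Rightarrow B$ (concrete algorithmic inference) and $b\sqsubseteq B$, then $\Gamma\vdash e : b$ (declarative typing).
   Context: Fix a set of type constructors, each with a fixed arity, and an infinite set of type variables. Base types are $B ::= \tau \mid C\,B_1\ldots B_k$; ground base types $b$ contain no type variables. Types are $T ::= B\mid B\to T$; ground types $t ::= b \mid b\to t$. A polytype is $\forall\tau_1\ldots\tau_n.T$. A component library $\Lambda$ is a finite map from component names $c$ to polytypes; the arity of $c$ is the number of arrows in $\Lambda(c)$. Substitutions $\sigma$ map type variables to base types (identity elsewhere). A bottom type $\bot$ is added; $\mathbf{B}_\bot$ = base types $\cup\{\bot\}$. $T'\sqsubseteq T$ iff $T'=\sigma T$ for some $\sigma$; $\bot\sqsubseteq B$ for all $B$; $\equiv$ is mutual $\sqsubseteq$. The bottom substitution $\sigma_\bot$ sends every type to $\bot$, and every substitution maps $\bot$ to $\bot$. $\mathrm{mgu}$ denotes the most general (simultaneous) unifier of a sequence of pairs of types, which is $\sigma_\bot$ if no proper unifier exists and the identity for the empty sequence. $\mathrm{fresh}(\forall\bar\tau.T)$ renames $\bar\tau$ to fresh variables. Type transformer: if $\mathrm{fresh}(\Lambda(c))=B'_1\to\cdots\to B'_m\to B'$ then $[\![c]\!](B_1,\ldots,B_m)=\sigma B'$ with $\sigma=\mathrm{mgu}(B_1,B'_1;\ldots;B_m,B'_m)$. Terms (in $\eta$-long form): application terms $e ::= x \mid c(e_1,\ldots,e_m)$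 with $m$ the arity of $c$; normal-form terms $E ::= e\mid \lambda x.E$. A typing environment $\Gamma$ maps variables to ground base types. Declarative typing $\Gamma\vdash E:t$ ($t$ ground): (Var) if $\Gamma(x)=b$ then $\Gamma\vdash x:b$; (App) if $\Lambda(c)=\forall\bar\tau.T$, $\sigma T=b_1\to\cdots\to b_m\to b$ is ground and $\Gamma\vdash e_i:b_i$ for all $i$, then $\Gamma\vdash c(e_1,\ldots,e_m):b$; (Fun) if $\Gamma,x{:}b\vdash E:t$ then $\Gamma\vdash\lambda x.E : b\to t$. Concrete algorithmic inference $\Gamma\vdash e\Rightarrow B$: if $\Gamma(x)=b$ then $\Gamma\vdash x\Rightarrow b$; if $\Gamma\vdash e_i\Rightarrow B_i$ for all $i$ then $\Gamma\vdash c(e_1,\ldots,e_m)\Rightarrow [\![c]\!](B_1,\ldots,B_m)$. *)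

(* Defs.v *)
From Stdlib Require Import List.
Import ListNotations.
Set Implicit Arguments.

Section TypeSystem.

(* Type constructor names [K], with arity [ar];
   component names [C]; term variables are [nat]; type variables are [nat]. *)
Variable K : Type.
Variable ar : K -> nat.
Variable C : Type.

Inductive bty : Type :=
| TVar : nat -> bty
| TCon : K -> list bty -> bty.

Fixpoint wf_bty (t : bty) : Prop :=
  match t with
  | TVar _ => True
  | TCon k ts => length ts = ar k /\ fold_right (fun u acc => wf_bty u /\ acc) True ts
  end.

Fixpoint occurs (n : nat) (t : bty) : Prop :=
  match t with
  | TVar m => n = m
  | TCon _ ts => fold_right (fun u acc => occurs n u \/ acc) False ts
  end.

Definition ground (t : bty) : Prop := forall n, ~ occurs n t.

(* Types T ::= B | B -> T, represented as (B1 :: .. :: Bm, B) for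
   B1 -> .. -> Bm -> B.  A polytype forall tau1..taun. T is (taus, T). *)
Record ty := mkTy { ty_args : list bty; ty_res : bty }.
Record polytype := mkPoly { pt_vars : list nat; pt_ty : ty }.

Definition closed_poly (p : polytype) : Prop :=
  forall n, (Exists (occurs n) (ty_args (pt_ty p)) \/ occurs n (ty_res (pt_ty p))) ->
            In n (pt_vars p).

Definition wf_poly (p : polytype) : Prop :=
  Forall wf_bty (ty_args (pt_ty p)) /\ wf_bty (ty_res (pt_ty p)) /\ closed_poly p.

(* component library: (finite) partial map from component names to polytypes;
   the arity of c is the number of arrows, i.e. length of ty_args *)
Definition library := C -> option polytype.

Fixpoint subst (s : nat -> bty) (t : bty) : bty :=
  match t with
  | TVar n => s n
  | TCon k ts => TCon k (map (subst s) ts)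
  end.

(* B_bot = option bty, with None = bottom.
   Substitutions with bottom: SBot = sigma_bot, or a proper substitution. *)
Inductive sub := SBot | SProper (s : nat -> bty).

Definition app_sub (sg : sub) (t : option bty) : option bty :=
  match sg with
  | SBot => None
  | SProper s => option_map (subst s) t
  end.

(* T' ⊑ T  iff T' = sigma T for some sigma (this includes bot ⊑ B via sigma_bot) *)
Definition sqle (t' t : option bty) : Prop := exists sg : sub, t' = app_sub sg t.

Definition unifies (sg : sub) (ps : list (option bty * option bty)) : Prop :=
  Forall (fun p => app_sub sg (fst p) = app_sub sg (snd p)) ps.

Definition is_mgu (ps : list (option bty * option bty)) (sg : sub) : Prop :=
  (sg = SBot /\ forall s, ~ unifies (SProper s) ps)
  \/ (exists s, sg = SProper s /\ unifies (SProper s) ps /\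
        forall s', unifies (SProper s') ps ->
          exists th, forall n, s' n = subst th (s n)).

(* fresh(forall taus. T): rename the bound variables injectively to variables
   not occurring in the given arguments *)
Definition renaming (taus : list nat) (rho : nat -> nat) (n : nat) : bty :=
  if in_dec PeanoNat.Nat.eq_dec n taus then TVar (rho n) else TVar n.

Definition fresh_for (taus : list nat) (rho : nat -> nat) (Bs : list (option bty)) : Prop :=
  (forall x y, In x taus -> In y taus -> rho x = rho y -> x = y) /\
  (forall x, In x taus -> forall B, In (Some B) Bs -> ~ occurs (rho x) B).

Variable Lam : library.

Definition transformer (c : C) (Bs : list (option bty)) (R : option bty) : Prop :=
  exists p, Lam c = Some p /\
  exists rho, fresh_for (pt_vars p) rho Bs /\
  let fr := subst (renaming (pt_vars p) rho) in
  let args' := map fr (ty_args (pt_ty p)) in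
  length Bs = length args' /\
  exists sg, is_mgu (combine Bs (map Some args')) sg /\
    R = app_sub sg (Some (fr (ty_res (pt_ty p)))).

Inductive tm : Type :=
| TmVar : nat -> tm
| TmApp : C -> list tm -> tm.

Definition env := nat -> option bty.

Inductive infer (G : env) : tm -> option bty -> Prop :=
| Inf_Var : forall x b, G x = Some b -> infer G (TmVar x) (Some b)
| Inf_App : forall c es Bs R,
    Forall2 (infer G) es Bs ->
    transformer c Bs R ->
    infer G (TmApp c es) R.

Inductive decl (G : env) : tm -> bty -> Prop :=
| Decl_Var : forall x b, G x = Some b -> decl G (TmVar x) b
| Decl_App : forall c es p s,
    Lam c = Some p ->
    Forall ground (map (subst s) (ty_args (pt_ty p))) ->
    ground (subst s (ty_res (pt_ty p))) ->
    Forall2 (decl G) es (map (subst s) (ty_args (pt_ty p))) ->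
    decl G (TmApp c es) (subst s (ty_res (pt_ty p))).

End TypeSystem.

(* Main.v *)
Require Import Defs.
From Stdlib Require Import List.
Import ListNotations.

Section S.
Variable K : Type.
Variable C : Type.

Fixpoint bty_ind' (P : bty K -> Prop) (HV : forall n, P (TVar K n))
  (HC : forall k ts, Forall P ts -> P (TCon k ts)) (t : bty K) : P t :=
  match t with
  | TVar _ n => HV n
  | TCon k ts => HC k ts ((fix go l := match l return Forall P l with
                                        | [] => Forall_nil _
                                        | x :: l => Forall_cons _ (bty_ind' P HV HC x) (go l) end) ts)
  end.

Lemma subst_comp (f g : nat -> bty K) t :
  subst f (subst g t) = subst (fun n => subst f (g n)) t.
Proof.
  induction t using bty_ind'; simpl; auto.
  f_equal. rewrite map_map. induction H; simpl; auto. f_equal; auto.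
Qed.

Lemma subst_ext (f g : nat -> bty K) t : (forall n, f n = g n) -> subst f t = subst g t.
Proof.
  intro E. induction t using bty_ind'; simpl; auto.
  f_equal. induction H; simpl; auto. f_equal; auto.
Qed.

Lemma occurs_con n k (ts : list (bty K)) :
  occurs n (TCon k ts) <-> Exists (occurs n) ts.
Proof.
  simpl. induction ts; simpl; split; intro H.
  - destruct H.
  - inversion H.
  - destruct H as [H|H]; [left; auto| right; apply IHts; auto].
  - inversion H; subst; [left; auto | right; apply IHts; auto].
Qed.

Lemma ground_subst_id (s : nat -> bty K) t : ground t -> subst s t = t.
Proof.
  induction t using bty_ind'; intro G; simpl.
  - exfalso. apply (G n). simpl. reflexivity.
  - f_equal. induction H; simpl; auto.
    f_equal.
    + apply H. intros m Hm. apply (G m). apply occurs_con. left; auto.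
    + apply IHForall. intros m Hm. apply (G m). apply occurs_con.
      apply occurs_con in Hm. right; auto.
Qed.

Lemma occurs_subst (f : nat -> bty K) n t :
  occurs n (subst f t) -> exists m, occurs n (f m).
Proof.
  induction t using bty_ind'; simpl; intro Ho.
  - eauto.
  - change (occurs n (TCon k (map (subst f) ts))) in Ho.
    apply occurs_con in Ho. induction H; simpl in Ho; inversion Ho; subst; auto.
Qed.

Lemma ground_subst (f : nat -> bty K) t :
  (forall n, ground (f n)) -> ground (subst f t).
Proof.
  intros Hf n Ho. destruct (occurs_subst f n t Ho) as [m Hm]. exact (Hf m n Hm).
Qed.

Variable Lam : library K C.
Variable G : env K.

Hypothesis HG0 : forall x b, G x = Some b -> ground b.

Lemma var_lemma x b' : G x = Some b' -> forall b, ground b -> sqle (Some b) (Some b') -> decl Lam G (TmVar C x) b.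
Proof.
  intros Hx b Hb [sg Hsg]. destruct sg; simpl in Hsg; [discriminate|].
  injection Hsg as ->. rewrite ground_subst_id by (eapply HG0; eauto).
  constructor; auto.
Qed.

Lemma args_lemma (s th : nat -> bty K) (fr : bty K -> bty K) :
  forall es Bs (args : list (bty K)),
  Forall2 (fun e B => forall b, ground b -> sqle (Some b) B -> decl Lam G e b) es Bs ->
  Forall (fun p => app_sub (SProper s) (fst p) = app_sub (SProper s) (snd p))
     (combine Bs (map Some (map fr args))) ->
  length Bs = length (map fr args) ->
  (forall a, ground (subst th a)) ->
  (forall a B, subst s B = subst s (fr a) -> sqle (Some (subst th a)) (Some B)) ->
  Forall2 (decl Lam G) es (map (subst th) args).
Proof.
  intros es Bs args HF. revert args. induction HF; intros args HU HL Hg Hsq.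
  - destruct args; simpl in *; [constructor | discriminate].
  - destruct args as [|a args]; simpl in *; [discriminate|].
    inversion HU; subst. simpl in *. constructor.
    + apply H; auto. destruct y as [B|]; simpl in *; [|discriminate].
      inversion H2. apply Hsq; auto.
    + apply IHHF; auto.
Qed.

Lemma app_lemma c es Bs R :
  Forall2 (fun e B => forall b, ground b -> sqle (Some b) B -> decl Lam G e b) es Bs ->
  transformer Lam c Bs R ->
  forall b, ground b -> sqle (Some b) R -> decl Lam G (TmApp c es) b.
Proof.
  intros HF [p [Hp [rho [_ [HL [sg [Hmgu HR]]]]]]] b Hb [sg' Hsg'].
  subst R.
  destruct Hmgu as [[-> _] | [s [-> [HU _]]]]; [simpl in Hsg'; destruct sg'; discriminate|].
  destruct sg' as [|s']; simpl in Hsg'; [discriminate|].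
  injection Hsg' as Hbe.
  set (ren := renaming K (pt_vars p) rho) in *.
  set (th := fun n => subst (fun _ => b) (subst s' (subst s (ren n)))).
  assert (Hth : forall t, subst th t = subst (fun _ => b) (subst s' (subst s (subst ren t)))).
  { intro t. rewrite !subst_comp. apply subst_ext. intro n. unfold th. rewrite !subst_comp. reflexivity. }
  assert (Hres : subst th (ty_res (pt_ty p)) = b).
  { rewrite Hth, <- Hbe. apply ground_subst_id; auto. }
  rewrite <- Hres.
  assert (Hg : forall t, ground (subst th t)).
  { intro t. apply ground_subst. intro n. unfold th. apply ground_subst. intros _; auto. }
  apply Decl_App with (p := p); auto.
  - apply Forall_forall. intros x Hx. apply in_map_iff in Hx. destruct Hx as [a [<- _]]. auto.
  - eapply args_lemma with (s := s) (fr := subst ren); eauto.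
    intros a B0 HB. exists (SProper (fun n => subst (fun _ => b) (subst s' (s n)))).
    simpl. f_equal. rewrite Hth, <- HB. rewrite !subst_comp. apply subst_ext. intro n. rewrite !subst_comp. reflexivity.
Qed.

Fixpoint main_fix e B (H : infer Lam G e B) {struct H} :
  forall b, ground b -> sqle (Some b) B -> decl Lam G e b :=
  match H in infer _ _ e B return forall b, ground b -> sqle (Some b) B -> decl Lam G e b with
  | @Inf_Var _ _ _ _ x b' Hx => fun b Hb Hs => var_lemma x b' Hx b Hb Hs
  | @Inf_App _ _ _ _ c es Bs R HF HT =>
      app_lemma c es Bs R
        ((fix go es Bs (HF : Forall2 (infer Lam G) es Bs) :=
            match HF in Forall2 _ es Bs return
              Forall2 (fun e B => forall b, ground b -> sqle (Some b) B -> decl Lam G e b) es Bs with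
            | @Forall2_nil _ _ _ => Forall2_nil _
            | @Forall2_cons _ _ _ _ _ _ _ h t => Forall2_cons _ _ (main_fix _ _ h) (go _ _ t)
            end) es Bs HF) HT
  end.
End S.

Theorem mainTheorem3 (K : Type) (ar : K -> nat) (C : Type) (Lam : library K C)
  (HLam : forall c p, Lam c = Some p -> wf_poly ar p)
  (G : env K)
  (HG : forall x b, G x = Some b -> ground b /\ wf_bty ar b)
  (e : tm C) (B : option (bty K)) (b : bty K)
  (Hb : ground b) (Hbwf : wf_bty ar b) :
  infer Lam G e B -> sqle (Some b) B -> decl Lam G e b.
Proof.
  intro H. apply (main_fix K C Lam G (fun x b0 h => proj1 (HG x b0 h)) e B H b Hb).
Qed.
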